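(* For every graph $G$, $mw(G) \leq pw(G)+1$, where $mw(G)$ is the matching width and $pw(G)$ the pathwidth of $G$.
   Context: For a permutation $SV=(v_1,\dots,v_n)$ of $V(G)$ and $1\le i\le n$, let $V_i=\{v_1,\dots,v_i\}$ and let $G_i$ be the graph on $V(G)$ whose edges are the edges of $G$ with one end in $V_i$ and the other in $V(G)\setminus V_i$. The matching width of $SV$ is $\max_i \nu(G_i)$, where $\nu$ denotes maximum matching size, and the matching width $mw(G)$ is the minimum of this quantity over all permutations $SV$ of $V(G)$. Pathwidth is the standard notion (minimum over path decompositions of the maximum bag size minus one). *)

(* Defs.v *)
(* Finite simple graphs as symmetric irreflexive relations. *)
From mathcomp Require Import all_boot fingroup perm.
Set Implicit Arguments. Unset Strict Implicit. Unset Printing Implicit Defensive.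

Section Defs.
Variable T : finType.

(* M is a matching of the graph G_A: the edges of e with one end in A and
   the other in V \ A.  Edges are 2-element vertex sets; distinct edges of
   a matching are disjoint. *)
Definition cut_matching (e : rel T) (A : {set T}) (M : {set {set T}}) : bool :=
  [forall E in M, exists x, exists y,
      [&& E == [set x; y], e x y, x \in A & y \notin A]] &&
  [forall E1 in M, forall E2 in M, (E1 != E2) ==> [disjoint E1 & E2]].

Definition nu_cut (e : rel T) (A : {set T}) : nat :=
  \max_(M : {set {set T}} | cut_matching e A M) #|M|.

(* the ordering SV induced by a permutation p: v_k = p (k-th element of enum T);
   V_i = {v_1, ..., v_i} *)
Definition Vprefix (p : {perm T}) (i : nat) : {set T} :=
  [set x in take i (map p (enum T))].

Definition mw_of (e : rel T) (p : {perm T}) : nat :=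
  \max_(1 <= i < #|T|.+1) nu_cut e (Vprefix p i).

Definition mw (e : rel T) : nat :=
  \big[minn/mw_of e 1%g]_(p : {perm T}) mw_of e p.

Definition is_path_decomp (e : rel T) (D : seq {set T}) : Prop :=
  (forall v : T, exists2 B, B \in D & v \in B) /\
  (forall x y : T, e x y -> exists2 B, B \in D & (x \in B) && (y \in B)) /\
  (forall (v : T) (i j k : nat), i <= j -> j <= k -> k < size D ->
     v \in nth set0 D i -> v \in nth set0 D k -> v \in nth set0 D j).

Definition pd_width (D : seq {set T}) : nat := (\max_(B <- D) #|B|).-1.

Definition is_pathwidth (e : rel T) (k : nat) : Prop :=
  (exists2 D, is_path_decomp e D & pd_width D = k) /\
  (forall D, is_path_decomp e D -> k <= pd_width D).

End Defs.

(* Main.v *)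
Require Import Defs.
From mathcomp Require Import all_boot fingroup perm.
Set Implicit Arguments. Unset Strict Implicit. Unset Printing Implicit Defensive.

Lemma bigmin_le (I : eqType) (r : seq I) (F : I -> nat) x q :
  q \in r -> \big[minn/x]_(p <- r) F p <= F q.
Proof.
elim: r => [|a r IH] //; rewrite in_cons big_cons => /orP [/eqP <-|/IH H].
  exact: geq_minl.
exact: leq_trans (geq_minr _ _) H.
Qed.

Section Main.
Variable T : finType.

Lemma sorted_perm (f : T -> nat) : exists p : {perm T},
  forall i x y, x \in Vprefix p i -> y \notin Vprefix p i -> f x <= f y.
Proof.
set leT := fun x y : T => f x <= f y.
set s := sort leT (enum T).
have tot : total leT by move=> x y; rewrite /leT leq_total.
have ss : sorted leT s by apply: sort_sorted.
have pe : perm_eq s (enum T) by rewrite perm_sort.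
have us : uniq s by rewrite (perm_uniq pe) enum_uniq.
have szs : size s = size (enum T) by rewrite (perm_size pe).
have ms : forall x, x \in s by move=> x; rewrite (perm_mem pe) mem_enum.
pose g := fun x => nth x s (index x (enum T)).
have ltx : forall x, index x (enum T) < size s.
  by move=> x; rewrite szs index_mem mem_enum.
have ginj : injective g.
  move=> x y; rewrite /g (set_nth_default y x (ltx x)) => /eqP.
  rewrite nth_uniq // => /eqP.
  by move/(congr1 (fun k => nth x (enum T) k)); rewrite !nth_index ?mem_enum.
exists (perm ginj) => i x y; rewrite /Vprefix.
have -> : map (perm ginj) (enum T) = s.
  apply: (@eq_from_nth _ x); first by rewrite size_map szs.
  move=> k; rewrite size_map => hk.
  rewrite (nth_map x) // permE /g index_uniq ?enum_uniq //.
  by rewrite (set_nth_default x) // szs.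
rewrite !inE => hx hy.
case: (leqP i (size s)) => hi; last first.
  by move: hy; rewrite take_oversize ?ms // ltnW.
move: hx hy; rewrite !in_take_leq // -leqNgt => hx hy.
rewrite -(nth_index x (ms x)) -(nth_index x (ms y)).
apply: (sorted_leq_nth (leT:=leT)) => //.
- by move=> a b c; rewrite /leT; apply: leq_trans.
- by move=> a; rewrite /leT.
- by rewrite inE index_mem.
- by rewrite inE index_mem.
- exact: leq_trans (ltnW hx) hy.
Qed.

Lemma cut_bound (e : rel T) (D : seq {set T}) (f : T -> nat) (A : {set T})
  (M : {set {set T}}) :
  is_path_decomp e D ->
  (forall v j, j < size D -> v \in nth set0 D j -> j <= f v) ->
  (forall v, f v < size D /\ v \in nth set0 D (f v)) ->
  (forall x y, x \in A -> y \notin A -> f x <= f y) ->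
  cut_matching e A M -> #|M| <= \max_(B <- D) #|B|.
Proof.
move=> [_ [Hedge Hconv]] Hmax Hf HA /andP [/forallP HM /forallP Hdis].
case: (set_0Vmem M) => [-> | [E0 E0M]]; first by rewrite cards0.
have /existsP [x0 /existsP [y0 /and4P [_ _ x0A _]]] := implyP (HM E0) E0M.
pose z := [arg max_(x > x0 in A) f x].
have [zA zmax] : z \in A /\ forall x, x \in A -> f x <= f z.
  by rewrite /z; case: arg_maxnP => // w wA H; split.
pose L := f z.
pose g := fun E : {set T} => odflt x0 [pick y in E :\: A].
have gprop : forall E, E \in M ->
   exists x, [/\ E = [set x; g E], e x (g E), x \in A & g E \notin A].
  move=> E EM; have /existsP [x /existsP [y /and4P [/eqP -> exy xA yA]]] :=
    implyP (HM E) EM.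
  have -> : g [set x; y] = y.
    rewrite /g; case: pickP => [w|] /=.
      rewrite !inE => /andP [wA /orP [/eqP wx|/eqP //]].
      by rewrite wx xA in wA.
    by move/(_ y); rewrite !inE eqxx orbT yA.
  by exists x.
have ginj : {in M &, injective g}.
  move=> E1 E2 E1M E2M h.
  apply/eqP; apply: contraT => ne.
  have := implyP (implyP (forallP (implyP (Hdis E1) E1M) E2) E2M) ne.
  move/disjointFr => H.
  have h1 : g E1 \in E1.
    by have [x [hx _ _ _]] := gprop E1 E1M; rewrite {2}hx !inE eqxx orbT.
  have h2 : g E1 \in E2.
    by rewrite h; have [x [hx _ _ _]] := gprop E2 E2M; rewrite {2}hx !inE eqxx orbT.
  by rewrite (H _ h1) in h2.
have hsub : g @: M \subset nth set0 D L.
  apply/subsetP => y /imsetP [E EM ->].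
  have [x [_ exy xA yA]] := gprop E EM.
  have [B BD /andP [xB yB]] := Hedge _ _ exy.
  pose j := index B D.
  have jlt : j < size D by rewrite index_mem.
  have hB : nth set0 D j = B by rewrite nth_index.
  have [fylt fyin] := Hf (g E).
  apply: (Hconv (g E) j L (f (g E))) => //.
  - apply: leq_trans (Hmax x j jlt _) (zmax x xA); by rewrite hB.
  - exact: HA.
  - by rewrite hB.
rewrite -(card_in_imset ginj).
apply: leq_trans (subset_leq_card hsub) _.
have [Llt _] := Hf z.
by apply: leq_bigmax_seq => //; apply: mem_nth.
Qed.
End Main.

Theorem theorem6 (T : finType) (e : rel T)
  (e_sym : symmetric e) (e_irr : irreflexive e) (pw : nat) :
  is_pathwidth e pw -> mw e <= pw + 1.
Proof.
move=> [[D HD wD] _].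
have HD' := HD; move: HD' => [Hcov _].
pose f := fun v : T => \max_(j : 'I_(size D) | v \in nth set0 D j) (j : nat).
have Hmax : forall v j, j < size D -> v \in nth set0 D j -> j <= f v.
  move=> v j hj hv; exact: (@leq_bigmax_cond _ _ (fun k : 'I_(size D) => (k : nat)) (Ordinal hj)).
have Hf : forall v, f v < size D /\ v \in nth set0 D (f v).
  move=> v; have [B BD vB] := Hcov v.
  have hj : index B D < size D by rewrite index_mem.
  have pos : 0 < #|[pred k : 'I_(size D) | v \in nth set0 D k]|.
    apply/card_gt0P; exists (Ordinal hj); by rewrite inE /= nth_index.
  have [k kA kE] := eq_bigmax_cond (fun k : 'I_(size D) => (k : nat)) pos.
  rewrite /f kE; split; first exact: ltn_ord.
  by move: kA; rewrite inE.
have [p Hp] := sorted_perm f.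
apply: (@leq_trans (mw_of e p)).
  by rewrite /mw; apply: bigmin_le; rewrite mem_index_enum.
rewrite /mw_of; apply/bigmax_leqP_seq => i _ _.
rewrite /nu_cut; apply/bigmax_leqP => M HM.
apply: leq_trans (cut_bound HD Hmax Hf (Hp i) HM) _.
by rewrite -wD /pd_width addn1 leqSpred.
Qed.
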